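(* Let $\mathcal{S}$ be a relational structure admitting an injective unary FA-presentation $(a^*,\phi)$, and let $R$ be a binary relation in the signature of $\mathcal{S}$. Let $Q$ be the equivalence relation generated by $R$. Then $\Lambda(Q,\phi)=\{(u,v)\in a^*\times a^*:(u\phi,v\phi)\in Q\}$ is regular. Hence $\mathcal{S}$ augmented by $Q$ is also unary FA-presentable.
   Context: For words $w_1,\dots,w_r$ over a finite alphabet $A$, $\mathrm{conv}(w_1,\dots,w_r)$ is the word over $(A\cup\{\$\})^r$ (with $\$\notin A$) whose $j$-th letter is the tuple of $j$-th letters of the $w_i$, shorter words being padded at the end with $\$$. A relation $X\subseteq (A^* )^r$ is regular if $\{\mathrm{conv}(w_1,\dots,w_r):(w_1,\dots,w_r)\in X\}$ is a regular language. An FA-presentation of a relational structure $\mathcal{S}=(S,R_1,\dots,R_n)$ is a pair $(L,\phi)$ with $L$ a regular language over a finite alphabet and $\phi:L\to S$ surjective such that for every relation $R\in\{=,R_1,\dots,R_n\}$ of arity $r$ the relation $\Lambda(R,\phi)=\{(w_1,\dots,w_r)\in L^r : R(w_1\phi,\dots,w_r\phi)\}$ is regular. It is unary if $L$ is over a one-letter alphabet $\{a\}$; a structure is unary FA-presentable if it admits one. An injective unary FA-presentation $(a^*,\phi)$ is one with $L=a^*$ and $\phi$ injective. *)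

(* Defs.v *)
From Stdlib Require Import Relations.
From mathcomp Require Import all_boot.
Set Implicit Arguments. Unset Strict Implicit. Unset Printing Implicit Defensive.

Record dfa (Sigma : finType) := DFA {
  dfa_state : finType;
  dfa_start : dfa_state;
  dfa_final : pred dfa_state;
  dfa_trans : dfa_state -> Sigma -> dfa_state }.

Definition dfa_accepts (Sigma : finType) (M : dfa Sigma) (w : seq Sigma) : bool :=
  @dfa_final Sigma M (foldl (@dfa_trans Sigma M) (@dfa_start Sigma M) w).

Definition regular (Sigma : finType) (L : seq Sigma -> Prop) : Prop :=
  exists M : dfa Sigma, forall w, L w <-> dfa_accepts M w.

(* The padding symbol $ is [None]; the alphabet (A u {$})^r is
   {ffun 'I_r -> option A}. *)
Definition conv (A : finType) (r : nat) (ws : r.-tuple (seq A))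
  : seq {ffun 'I_r -> option A} :=
  mkseq (fun j => [ffun i => onth (tnth ws i) j]) (\max_(i < r) size (tnth ws i)).

Definition regular_rel (A : finType) (r : nat) (X : r.-tuple (seq A) -> Prop) : Prop :=
  regular (fun w => exists ws, X ws /\ conv ws = w).

Definition Lambda (S : Type) (Sigma : finType) (L : seq Sigma -> Prop)
  (phi : seq Sigma -> S) (r : nat) (R : r.-tuple S -> Prop)
  : r.-tuple (seq Sigma) -> Prop :=
  fun ws => (forall k, L (tnth ws k)) /\ R (map_tuple phi ws).

Definition eq_rel2 (S : Type) (t : 2.-tuple S) : Prop := tnth t ord0 = tnth t ord_max.

Definition FA_presentation (S : Type) (I : finType) (ar : I -> nat)
  (rels : forall i, (ar i).-tuple S -> Prop)
  (Sigma : finType) (L : seq Sigma -> Prop) (phi : seq Sigma -> S) : Prop :=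
  [/\ regular L,
      (forall s : S, exists w, L w /\ phi w = s),
      regular_rel (Lambda L phi (@eq_rel2 S))
    & forall i, regular_rel (Lambda L phi (rels i))].

(* Unary: the alphabet is the one-letter alphabet {a}, modelled by [unit]. *)
Definition unary_FA_presentable (S : Type) (I : finType) (ar : I -> nat)
  (rels : forall i, (ar i).-tuple S -> Prop) : Prop :=
  exists (L : seq unit -> Prop) (phi : seq unit -> S), FA_presentation rels L phi.

Definition injective_unary_FA_presentation (S : Type) (I : finType) (ar : I -> nat)
  (rels : forall i, (ar i).-tuple S -> Prop) (phi : seq unit -> S) : Prop :=
  FA_presentation rels (fun _ => True) phi /\ injective phi.

Definition binrel (S : Type) (I : finType) (ar : I -> nat)
  (rels : forall i, (ar i).-tuple S -> Prop) (i : I) (hi : ar i = 2)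
  : S -> S -> Prop :=
  fun x y => rels i (tcast (esym hi) [tuple x; y]).

Definition gen_equiv (S : Type) (R : S -> S -> Prop) : S -> S -> Prop :=
  clos_refl_sym_trans S R.

Definition aug_ar (I : finType) (ar : I -> nat) (o : option I) : nat :=
  if o is Some i then ar i else 2.

Definition aug_rels (S : Type) (I : finType) (ar : I -> nat)
  (rels : forall i, (ar i).-tuple S -> Prop) (Q : S -> S -> Prop)
  : forall o : option I, (aug_ar ar o).-tuple S -> Prop :=
  fun o => match o as o0 return (aug_ar ar o0).-tuple S -> Prop with
           | Some i => rels i
           | None => fun t => Q (tnth t ord0) (tnth t ord_max)
           end.

(* Main.v *)
Require Import Defs.
From Stdlib Require Import Relations.
From mathcomp Require Import all_boot.
From Stdlib Require Import Classical ClassicalEpsilon.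
From mathcomp Require Import zify.
Set Implicit Arguments. Unset Strict Implicit. Unset Printing Implicit Defensive.

Lemma mod_common (p m m' : nat) : m %% p = m' %% p ->
  exists a a', m + a * p = m' + a' * p.
Proof.
move=> H; exists (m' %/ p), (m %/ p).
have e1 := divn_eq m p; have e2 := divn_eq m' p.
move: e1 e2 H; move: (m %/ p) (m' %/ p) (m %% p) (m' %% p) => a b r r'.
lia.
Qed.

Section Core.
Variable E : nat -> nat -> Prop.
Variables K p : nat.
Hypothesis Esym : forall m n, E m n -> E n m.
Hypothesis K1 : 0 < K.
Hypothesis p1 : 0 < p.
Hypothesis N1 : forall m n, K <= m -> K <= n -> (E m n <-> E (m+p) (n+p)).
Hypothesis N2 : forall m n, m + K <= n -> (E m n <-> E m (n+p)).

Definition Qc := clos_refl_trans nat E.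

Lemma N1it c m n : K <= m -> K <= n -> (E m n <-> E (m + c*p) (n + c*p)).
Proof.
elim: c m n => [|c IH] m n Hm Hn; first by rewrite !mul0n !addn0.
rewrite (IH m n Hm Hn) (N1 (m := m + c*p) (n := n + c*p)); try lia.
have e1 : m + c.+1 * p = m + c * p + p by rewrite mulSn; lia.
have e2 : n + c.+1 * p = n + c * p + p by rewrite mulSn; lia.
by rewrite e1 e2.
Qed.

Lemma N2it c m n : m + K <= n -> (E m n <-> E m (n + c*p)).
Proof.
elim: c n => [|c IH] n Hn; first by rewrite mul0n addn0.
rewrite (IH n Hn) (N2 (n := n + c*p)); last by lia.
have e2 : n + c.+1 * p = n + c * p + p by rewrite mulSn; lia.
by rewrite e2.
Qed.

Lemma N2cong M n1 n2 : M + K <= n1 -> M + K <= n2 -> n1 %% p = n2 %% p ->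
  (E M n1 <-> E M n2).
Proof.
move=> h1 h2 /mod_common [a [a' e]].
rewrite (N2it a h1) e -N2it //.
Qed.

Lemma cls m n m' n' : K <= m -> K <= m' -> m + K <= n -> m' + K <= n' ->
  m %% p = m' %% p -> n %% p = n' %% p -> (E m n <-> E m' n').
Proof.
move=> hm hm' hn hn' /mod_common [a [a' e]] hnn.
have h1 := N1it a (m := m) (n := n) hm (leq_trans (leq_addl _ _) hn).
have h2 := N1it a' (m := m') (n := n') hm' (leq_trans (leq_addl _ _) hn').
rewrite h1 h2 e; apply: N2cong; try lia.
by rewrite (addnC n) (addnC n') !modnMDl.
Qed.

Lemma Qsym m n : Qc m n -> Qc n m.
Proof.
elim=> [x y H|x|x y z _ IH1 _ IH2]; first by apply: rt_step; apply: Esym.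
- exact: rt_refl.
- exact: rt_trans IH2 IH1.
Qed.

Definition Nf := (p + 1) * K.
Definition P := p * Nf`!.

Lemma P_pos : 0 < P.
Proof. by rewrite /P muln_gt0 p1 fact_gt0. Qed.

Lemma P_ge : p * K <= P.
Proof.
rewrite /P leq_mul2l; apply/orP; right.
apply: leq_trans (fact_geq _); rewrite /Nf; lia.
Qed.

Lemma P_eq : P = Nf`! * p.
Proof. by rewrite /P mulnC. Qed.

Definition good x := Qc x (x + P).

Lemma long_good z w : E z w -> z + K <= w -> good w.
Proof.
move=> Hzw Hle; rewrite /good.
apply: rt_trans (_ : Qc w z) _; first by apply: rt_step; apply: Esym.
apply: rt_step; rewrite P_eq; exact/(N2it _ Hle).
Qed.

Definition He a b := E a b /\ K <= a /\ K <= b.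
Definition Hc := clos_refl_trans nat He.

Lemma Hc_Q a b : Hc a b -> Qc a b.
Proof.
elim=> [x y [H _]|x|x y z _ IH1 _ IH2]; first exact: rt_step.
- exact: rt_refl.
- exact: rt_trans IH1 IH2.
Qed.

Lemma Hc_trans a b c : Hc a b -> Hc b c -> Hc a c.
Proof. exact: rt_trans. Qed.

Lemma Hc_sym a b : Hc a b -> Hc b a.
Proof.
elim=> [x y [H [h1 h2]]|x|x y z _ IH1 _ IH2]; first by apply: rt_step; split; [apply: Esym|].
- exact: rt_refl.
- exact: rt_trans IH2 IH1.
Qed.

Lemma Hc_shift c a b : Hc a b -> Hc (a + c * p) (b + c * p).
Proof.
elim=> [x y [H [h1 h2]]|x|x y z _ IH1 _ IH2].
- apply: rt_step; split; first by rewrite -N1it.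
  split; apply: leq_trans (leq_addr _ _); done.
- exact: rt_refl.
- exact: rt_trans IH1 IH2.
Qed.

Lemma Hc_shiftP a b : Hc a b -> Hc (a + P) (b + P).
Proof. by rewrite P_eq; apply: Hc_shift. Qed.

Lemma Hc_good x v : Hc x v -> good v -> good x.
Proof.
move=> Hxv Hv; rewrite /good.
apply: rt_trans (Hc_Q Hxv) _; apply: rt_trans Hv _.
exact/Hc_Q/Hc_sym/Hc_shiftP.
Qed.

Lemma band L a b : Hc a b -> a <= L -> L <= b ->
  (exists g, Hc a g /\ good g) \/ (exists v, Hc a v /\ L <= v < L + K).
Proof.
move/clos_rt_rt1n_iff; elim=> [x|x y z Hxy Hyz IH] Hx Hz.
- right; exists x; split; first exact: rt_refl.
  have -> : x = L by lia. lia.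
- case: (leqP y L) => hy.
  + case: (IH hy Hz) => [[g [H1 H2]]|[v [H1 H2]]].
    * left; exists g; split=> //; apply: rt_trans H1; exact: rt_step.
    * right; exists v; split=> //; apply: rt_trans H1; exact: rt_step.
  + case: (ltnP y (L + K)) => hy2.
    * right; exists y; split; first exact: rt_step. lia.
    * left; exists y; split; first exact: rt_step.
      case: Hxy => Hxy _; apply: long_good Hxy _; lia.
Qed.

Lemma pump v d : Hc v (v + d) -> p %| d -> forall k, Hc v (v + k * d).
Proof.
move=> H /dvdnP [q ed] k; rewrite ed in H *; elim: k => [|k IH]; first by rewrite mul0n addn0; exact: rt_refl.
apply: rt_trans IH _.
have H2 := Hc_shift (k * q) H.
have e1 : v + k * q * p = v + k * (q * p) by rewrite mulnA.
have e2 : v + q * p + k * q * p = v + k.+1 * (q * p) by rewrite mulSn !mulnA; lia.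
by rewrite e1 e2 in H2.
Qed.

Lemma far_good a b : Hc a b -> a + p * K <= b -> exists g, Hc a g /\ good g.
Proof.
move=> Hab Hle.
case: (classic (exists g, Hc a g /\ good g)) => // Hno.
have Hb : forall i : 'I_p.+1, exists v, Hc a v /\ a + i * K <= v < a + i * K + K.
  move=> i; have hi : i * K <= p * K.
    by have := ltn_ord i; rewrite ltnS => hi; exact: leq_mul hi (leqnn K).
  by case: (band (L := a + i * K) Hab (leq_addr _ _) _) => //; lia.
pose f (i : 'I_p.+1) := proj1_sig (constructive_indefinite_description _ (Hb i)).
have Hf : forall i, Hc a (f i) /\ a + i * K <= f i < a + i * K + K.
  by move=> i; rewrite /f; case: (constructive_indefinite_description _ _).
pose r (i : 'I_p.+1) : 'I_p := Ordinal (ltn_pmod (f i) p1).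
have : ~~ injectiveb r.
  by apply/negP => /injectiveP inj; have := @leq_card _ _ r inj; rewrite !card_ord ltnn.
case/injectivePn => i [j] neij eqr.
have emod : f i %% p = f j %% p by move: eqr => /(congr1 val).
clear eqr.
wlog ltij : i j neij emod / i < j.
  move=> W; case: (ltngtP i j) => h; first exact: W h.
  - by apply: (W j i) => //; rewrite eq_sym.
  - by move: neij; rewrite (val_inj h) eqxx.
have hij : i.+1 * K <= j * K := leq_mul ltij (leqnn K).
have hjp : j * K <= p * K.
  by have := ltn_ord j; rewrite ltnS => hj; exact: leq_mul hj (leqnn K).
case: (Hf i) => Hi bi; case: (Hf j) => Hj bj.
move: hij; rewrite mulSn => hij.
have lt : f i < f j by lia.
set d := f j - f i.
have dpos : 0 < d by rewrite /d; lia.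
have dNf : d <= Nf by rewrite /d /Nf; lia.
have pd : p %| d by rewrite /d -eqn_mod_dvd ?(ltnW lt) // emod.
have dfact : d %| Nf`! by apply: dvdn_fact; rewrite dpos.
have Hd : Hc (f i) (f i + d).
  have -> : f i + d = f j by rewrite /d; lia.
  exact: rt_trans (Hc_sym Hi) Hj.
case/dvdnP: dfact => t et.
have := pump Hd pd (p * t).
have -> : p * t * d = P by rewrite /P et mulnA.
move=> HP; exfalso; apply: Hno; exists (f i); split=> //.
exact: Hc_Q.
Qed.

Lemma ng_window x y : ~ good x -> Hc x y -> x < y + p * K /\ y < x + p * K.
Proof.
move=> ng H; split.
- case: (ltnP x (y + p * K)) => // h; exfalso; apply: ng.
  case: (far_good (Hc_sym H) h) => g [Hg gg].
  exact: Hc_good (Hc_trans H Hg) gg.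
- case: (ltnP y (x + p * K)) => // h; exfalso; apply: ng.
  case: (far_good H h) => g [Hg gg]; exact: Hc_good Hg gg.
Qed.

Definition T := 2 * (p * K) + p + 3 * K.

Lemma KpK : K <= p * K.
Proof. by rewrite leq_pmull. Qed.

Lemma nolong x v z : ~ good x -> T <= x -> Hc x v -> E v z -> v < z + K /\ z < v + K.
Proof.
move=> ng hT Hxv Hvz; have [w1 w2] := ng_window ng Hxv.
have := KpK; rewrite /T in hT => kp.
split.
- case: (ltnP v (z + K)) => // h; exfalso; apply: ng; apply: (Hc_good Hxv).
  exact: long_good (Esym Hvz) h.
- case: (ltnP z (v + K)) => // h; exfalso; apply: ng.
  have Hz : Hc x z by apply: Hc_trans Hxv (rt_step _ _ _ _ _); split=> //; lia.
  exact: Hc_good Hz (long_good Hvz h).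
Qed.

Lemma step_in x v z : ~ good x -> T <= x -> Hc x v -> E v z -> Hc x z.
Proof.
move=> ng hT Hxv Hvz; have [w1 w2] := ng_window ng Hxv.
have [l1 l2] := nolong ng hT Hxv Hvz.
have := KpK; rewrite /T in hT => kp.
by apply: Hc_trans Hxv (rt_step _ _ _ _ _); split=> //; lia.
Qed.

Lemma Qcls x y : ~ good x -> T <= x -> Qc x y -> Hc x y.
Proof.
move=> ng hT /clos_rt_rtn1_iff; elim=> [|y' z Hyz _ IH]; first exact: rt_refl.
exact: step_in IH Hyz.
Qed.

Lemma Qshift x yy : ~ good x -> T <= x -> Qc (x + P) yy -> P <= yy /\ Hc x (yy - P).
Proof.
move=> ng hT /clos_rt_rtn1_iff; elim=> [|y z Hyz _ [IH1 IH2]].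
  by rewrite addnK; split; [exact: leq_addl | exact: rt_refl].
have := KpK => kp; have := P_ge => pge.
set y0 := y - P in IH2.
have ey : y = y0 + P by rewrite /y0 subnK.
have [w1 w2] := ng_window ng IH2.
rewrite /T in hT.
have Ey0 : forall w, K <= w -> E y0 w <-> E y (w + P).
  move=> w hw; rewrite ey P_eq; apply: N1it => //; lia.
case: (ltnP z (y + K)) => h1.
  case: (ltnP y (z + K)) => h2.
    have zP : P <= z by lia.
    split=> //; apply: (step_in ng hT IH2).
    by rewrite Ey0 ?subnK //; lia.
  exfalso.
  case: (ltnP y0 (z + K)) => h3.
    set m' := z %% p + p * K.
    have hm : z %% p < p := ltn_pmod z p1.
    have Ez : E m' y0.
      have c1 : z %% p = m' %% p by rewrite /m' addnC mulnC modnMDl modn_mod.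
      have c2 : y %% p = y0 %% p by rewrite ey P_eq addnC modnMDl.
      have := (cls (m := z) (n := y) (m' := m') (n' := y0)).
      move=> /(_ _ _ _ _ c1 c2) <-; try lia; exact: Esym.
    have [l1 l2] := nolong ng hT IH2 (Esym Ez); lia.
  have Ez : E z y0.
    by rewrite (N2it (Nf`!) (m := z) (n := y0)) // -P_eq -ey; apply: Esym.
  have [l1 l2] := nolong ng hT IH2 (Esym Ez); lia.
exfalso.
have E0 : E y0 (z - P) by rewrite Ey0 ?subnK //; lia.
have [l1 l2] := nolong ng hT IH2 E0; lia.
Qed.

Lemma ng_case m n : ~ good n -> T <= n ->
  (Qc m n <-> Hc n m) /\ (Qc (m + P) (n + P) <-> Hc n m).
Proof.
move=> ng hT; split; split.
- by move/Qsym; apply: Qcls.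
- by move/Hc_Q/Qsym.
- by move/Qsym/(Qshift ng hT) => [_]; rewrite addnK.
- by move/Hc_shiftP/Hc_Q/Qsym.
Qed.

Lemma Q_nice : exists T P, 0 < P /\
  (forall m n, T <= m -> T <= n -> (Qc m n <-> Qc (m + P) (n + P))) /\
  (forall m n, m + T <= n -> (Qc m n <-> Qc m (n + P))).
Proof.
exists T, P; split; first exact: P_pos.
split.
- move=> m n hm hn.
  case: (classic (good n)) => gn; last first.
    have [[h1 h2] [h3 h4]] := ng_case m gn hn.
    by split=> H; [apply/h4/h1 | apply/h2/h3].
  case: (classic (good m)) => gm; last first.
    have [[h1 h2] [h3 h4]] := ng_case n gm hm.
    split; [move/Qsym/h1/h4/Qsym | move/Qsym/h3/h2/Qsym]; done.
  split=> H.
  + apply: rt_trans (Qsym gm) _; exact: rt_trans H gn.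
  + apply: rt_trans gm _; apply: rt_trans H _; exact: Qsym gn.
- move=> m n hmn.
  have hT : T <= n by lia.
  have := KpK => kp; have := P_ge => pge.
  case: (classic (good n)) => gn.
    split=> H; [exact: rt_trans H gn | exact: rt_trans H (Qsym gn)].
  have [[h1 h2] [h3 h4]] := ng_case m gn hT.
  rewrite /T in hmn.
  split=> H; exfalso.
  + have [w1 w2] := ng_window gn (h1 H); lia.
  + have [H1 H2] := Qshift gn hT (Qsym H).
    have [w1 w2] := ng_window gn H2; lia.
Qed.
End Core.

Notation Sig := {ffun 'I_2 -> option unit}.
Definition AA : Sig := [ffun _ => Some tt].
Definition AN : Sig := [ffun i : 'I_2 => if i == ord0 then Some tt else None].
Definition NA : Sig := [ffun i : 'I_2 => if i == ord0 then None else Some tt].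

Lemma AA_AN : (AA == AN) = false.
Proof. by apply/eqP => /ffunP /(_ ord_max); rewrite !ffunE. Qed.
Lemma AA_NA : (AA == NA) = false.
Proof. by apply/eqP => /ffunP /(_ ord0); rewrite !ffunE. Qed.
Lemma AN_NA : (AN == NA) = false.
Proof. by apply/eqP => /ffunP /(_ ord0); rewrite !ffunE. Qed.

Definition cw m n : seq Sig := nseq (minn m n) AA ++ nseq (m - n) AN ++ nseq (n - m) NA.

Lemma conv_cw m n : conv [tuple nseq m tt; nseq n tt] = cw m n.
Proof.
have e : \max_(i < 2) size (tnth [tuple nseq m tt; nseq n tt] i) = maxn m n.
  by rewrite big_ord_recr big_ord1 /= !size_nseq.
rewrite /conv e.
apply: (@eq_from_nth _ AA).
  by rewrite size_mkseq /cw !size_cat !size_nseq; lia.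
rewrite size_mkseq => j hj.
rewrite nth_mkseq //.
apply/ffunP => i; rewrite ffunE.
rewrite /cw nth_cat size_nseq.
have Hi : i = ord0 \/ i = ord_max.
  by case: i => [[|[|i]] hi] //; [left|right]; apply: val_inj.
case: Hi => ->.
- rewrite (_ : tnth _ ord0 = nseq m tt) // onth_nseq.
  case: (ltnP j (minn m n)) => h1.
    by rewrite nth_nseq h1 ffunE; case: ifP => //; lia.
  rewrite nth_cat size_nseq; case: (ltnP (j - minn m n) (m - n)) => h2.
    by rewrite nth_nseq h2 ffunE /=; case: ifP => //; lia.
  rewrite nth_nseq; have h3 : j - minn m n - (m - n) < n - m by lia.
  by rewrite h3 ffunE /=; case: ifP => //; lia.
- rewrite (_ : tnth _ ord_max = nseq n tt) // onth_nseq.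
  case: (ltnP j (minn m n)) => h1.
    by rewrite nth_nseq h1 ffunE; case: ifP => //; lia.
  rewrite nth_cat size_nseq; case: (ltnP (j - minn m n) (m - n)) => h2.
    by rewrite nth_nseq h2 ffunE /=; case: ifP => //; lia.
  rewrite nth_nseq; have h3 : j - minn m n - (m - n) < n - m by lia.
  by rewrite h3 ffunE /=; case: ifP => //; lia.
Qed.

Lemma cw_inj m n m' n' : cw m n = cw m' n' -> m = m' /\ n = n'.
Proof.
move=> e.
have c1 := congr1 (count (pred1 AA)) e.
have c2 := congr1 (count (pred1 AN)) e.
have c3 := congr1 (count (pred1 NA)) e.
move: c1 c2 c3; rewrite /cw !count_cat !count_nseq /= eqxx.
rewrite ![NA == _]eq_sym ![AN == AA]eq_sym AA_AN AA_NA AN_NA /=.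
rewrite !eqxx /=; lia.
Qed.

Lemma unit_seq (s : seq unit) : s = nseq (size s) tt.
Proof. by elim: s => [|[] s IH] //=; rewrite -IH. Qed.

Lemma tuple2_unit (ws : 2.-tuple (seq unit)) :
  ws = [tuple nseq (size (tnth ws ord0)) tt; nseq (size (tnth ws ord_max)) tt].
Proof.
apply: eq_from_tnth => i.
have Hi : i = ord0 \/ i = ord_max.
  by case: i => [[|[|i]] hi] //; [left|right]; apply: val_inj.
case: Hi => ->.
  by rewrite (_ : tnth [tuple _; _] ord0 = nseq (size (tnth ws ord0)) tt) //; apply: unit_seq.
by rewrite (_ : tnth [tuple _; _] ord_max = nseq (size (tnth ws ord_max)) tt) //; apply: unit_seq.
Qed.

Lemma foldl_nseq (A B : Type) (f : A -> B -> A) s k c :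
  foldl f s (nseq k c) = iter k (fun y => f y c) s.
Proof. by elim: k s => [|k IH] s //; rewrite iterSr -IH. Qed.

Definition evper (A : Type) (f : A -> A) K0 p0 :=
  forall k, K0 <= k -> forall x, iter (k + p0) f x = iter k f x.

Lemma iter_ev (A : finType) (f : A -> A) : exists K0 p0, 0 < p0 /\ evper f K0 p0.
Proof.
pose N := #|{ffun A -> A}|.
pose g (k : 'I_N.+1) : {ffun A -> A} := [ffun x => iter k f x].
have : ~~ injectiveb g.
  by apply/negP => /injectiveP inj; have := @leq_card _ _ g inj; rewrite card_ord ltnn.
case/injectivePn => i [j] neij eqg.
have eqf : forall x, iter i f x = iter j f x.
  by move=> x; have := congr1 (fun h : {ffun A -> A} => h x) eqg; rewrite /g !ffunE.
clear eqg.
have key : forall i j : nat, (forall x, iter i f x = iter j f x) -> i < j ->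
    exists K0 p0, 0 < p0 /\ evper f K0 p0.
  move=> i' j' ef lt; exists i', (j' - i'); split; first by rewrite subn_gt0.
  move=> k hk x.
  have -> : k + (j' - i') = (k - i') + j' by lia.
  by rewrite iterD -ef -iterD subnK.
case: (ltngtP i j) => h; first exact: key eqf h.
- by apply: (key j i) => // x; rewrite eqf.
- by move: neij; rewrite (val_inj h) eqxx.
Qed.

Lemma evper_mono (A : Type) (f : A -> A) K0 p0 K1 c :
  evper f K0 p0 -> K0 <= K1 -> evper f K1 (c * p0).
Proof.
move=> H hK; elim: c => [|c IH] k hk x; first by rewrite mul0n addn0.
have -> : k + c.+1 * p0 = (k + c * p0) + p0 by rewrite mulSn; lia.
rewrite H ?IH //; lia.
Qed.

Lemma rel_nice (M : dfa Sig) (Rn : nat -> nat -> Prop) :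
  (forall m n, Rn m n <-> dfa_accepts M (cw m n)) ->
  exists K p, 0 < K /\ 0 < p /\
   (forall m n, K <= m -> K <= n -> (Rn m n <-> Rn (m + p) (n + p))) /\
   (forall m n, m + K <= n -> (Rn m n <-> Rn m (n + p)) /\ (Rn n m <-> Rn (n + p) m)).
Proof.
move=> HR.
pose tr (c : Sig) := fun s => @dfa_trans Sig M s c.
have acc : forall m n, Rn m n <-> dfa_final (iter (n - m) (tr NA)
     (iter (m - n) (tr AN) (iter (minn m n) (tr AA) (dfa_start M)))).
  by move=> m n; rewrite HR /dfa_accepts /cw !foldl_cat !foldl_nseq.
have [K1 [p1 [p1g H1]]] := iter_ev (tr AA).
have [K2 [p2 [p2g H2]]] := iter_ev (tr AN).
have [K3 [p3 [p3g H3]]] := iter_ev (tr NA).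
exists (K1 + K2 + K3).+1, (p1 * p2 * p3); split=> //; split.
  by rewrite !muln_gt0 p1g p2g p3g.
split.
- move=> m n hm hn; rewrite !acc.
  have -> : m + p1 * p2 * p3 - (n + p1 * p2 * p3) = m - n by lia.
  have -> : n + p1 * p2 * p3 - (m + p1 * p2 * p3) = n - m by lia.
  have -> : minn (m + p1 * p2 * p3) (n + p1 * p2 * p3) = minn m n + (p2 * p3) * p1.
    rewrite mulnC mulnA; lia.
  rewrite (evper_mono (p2 * p3) H1 (leq_addr (K2 + K3) K1)) //.
  lia.
- move=> m n hmn; rewrite !acc; split.
  + have -> : m - (n + p1 * p2 * p3) = 0 by lia.
    have -> : m - n = 0 by lia.
    have -> : minn m (n + p1 * p2 * p3) = minn m n by lia.
    have -> : n + p1 * p2 * p3 - m = (n - m) + (p1 * p2) * p3 by lia.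
    rewrite (evper_mono (p1 * p2) H3 (leq_addl (K1 + K2) K3)) //; lia.
  + have -> : m - (n + p1 * p2 * p3) = 0 by lia.
    have -> : m - n = 0 by lia.
    have -> : minn (n + p1 * p2 * p3) m = minn n m by lia.
    have -> : n + p1 * p2 * p3 - m = (n - m) + (p1 * p3) * p2.
      rewrite (mulnC p1 p3) -mulnA (mulnC p3) mulnA mulnC; lia.
    rewrite (evper_mono (p1 * p3) H2 (_ : K2 <= K1 + K2 + K3)) //; lia.
Qed.

Section Build.
Variable Qn : nat -> nat -> Prop.
Variables T P : nat.
Hypothesis P0 : 0 < P.
Hypothesis Qs : forall m n, Qn m n -> Qn n m.
Hypothesis QN1 : forall m n, T <= m -> T <= n -> (Qn m n <-> Qn (m + P) (n + P)).
Hypothesis QN2 : forall m n, m + T <= n -> (Qn m n <-> Qn m (n + P)).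

Definition inc a := if a.+1 < T + P then a.+1 else a.+1 - P.
Definition cl k := iter k inc 0.

Lemma cl_inv k : cl k < T + P /\ (k < T + P -> cl k = k) /\
  (T <= k -> T <= cl k /\ exists c, k = cl k + c * P).
Proof.
elim: k => [|k [IH1 [IH2 IH3]]].
  rewrite /cl /=; split; first lia.
  by split=> // hT; split=> //; exists 0.
rewrite /cl iterS -/(cl k) /inc.
case: ifP => h.
- split=> //; split; first by move=> hk; rewrite IH2 //; lia.
  move=> hk; case: (leqP T k) => hTk.
    have [a [c e]] := IH3 hTk; split; first lia.
    by exists c; lia.
  have e := IH2 (leq_trans hTk (leq_addr _ _)).
  by split; [lia | exists 0; lia].
- split; first lia.
  split; first by move=> hk; rewrite IH2 in h; lia.
  move=> hk; split; first lia.
  case: (leqP T k) => hTk.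
    have [a [c e]] := IH3 hTk; exists c.+1; rewrite mulSn; lia.
  have e := IH2 (leq_trans hTk (leq_addr _ _)); lia.
Qed.

Lemma QN1it c a b : T <= a -> T <= b -> (Qn a b <-> Qn (a + c * P) (b + c * P)).
Proof.
elim: c => [|c IH] ha hb; first by rewrite !mul0n !addn0.
rewrite (IH ha hb) (QN1 (m := a + c * P) (n := b + c * P)); try lia.
have e1 : a + c.+1 * P = a + c * P + P by rewrite mulSn; lia.
have e2 : b + c.+1 * P = b + c * P + P by rewrite mulSn; lia.
by rewrite e1 e2.
Qed.

Lemma QN2it c a b : a + T <= b -> (Qn a b <-> Qn a (b + c * P)).
Proof.
elim: c => [|c IH] hb; first by rewrite mul0n addn0.
rewrite (IH hb) (QN2 (m := a) (n := b + c * P)); last by lia.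
have e2 : b + c.+1 * P = b + c * P + P by rewrite mulSn; lia.
by rewrite e2.
Qed.

Lemma Q_cl m d : Qn m (m + d) <-> Qn (cl m) (cl m + cl d).
Proof.
have e1 : Qn m (m + d) <-> Qn m (m + cl d).
  case: (ltnP d (T + P)) => hd; first by have [_ [H _]] := cl_inv d; rewrite H.
  have [_ [_ h]] := cl_inv d; have [h1 [c e]] := h (leq_trans (leq_addr _ _) hd).
  rewrite {1}e addnA -QN2it //; lia.
rewrite e1.
case: (ltnP m (T + P)) => hm; first by have [_ [H _]] := cl_inv m; rewrite H.
have [_ [_ h]] := cl_inv m; have [h1 [c e]] := h (leq_trans (leq_addr _ _) hm).
rewrite {1 2}e (QN1it c (a := cl m) (b := cl m + cl d)) //; last by lia.
by have -> : cl m + c * P + cl d = cl m + cl d + c * P by lia.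
Qed.

Definition Cn := (T + P).-1.
Definition St := option ('I_3 * 'I_Cn.+1 * 'I_Cn.+1).
Definition mk (ph a b : nat) : St := Some (inord ph, inord a, inord b).

Definition trans (s : St) (c : Sig) : St :=
  match s with
  | None => None
  | Some (ph, a, b) =>
    if c == AA then (if nat_of_ord ph == 0 then mk 0 (inc a) b else None)
    else if c == AN then (if nat_of_ord ph <= 1 then mk 1 a (inc b) else None)
    else if c == NA then (if (nat_of_ord ph == 0) || (nat_of_ord ph == 2) then mk 2 a (inc b) else None)
    else None
  end.

Definition fin (s : St) : bool :=
  match s with
  | None => false
  | Some (_, a, b) =>
    if excluded_middle_informative (Qn a (a + b)) then true else false
  end.

Definition D : dfa Sig := @DFA Sig (option ('I_3 * 'I_Cn.+1 * 'I_Cn.+1)) (mk 0 0 0) fin trans.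

Lemma inordK' x : x < T + P -> nat_of_ord (inord x : 'I_Cn.+1) = x.
Proof. by move=> h; rewrite inordK // /Cn prednK //; lia. Qed.

Lemma inord3 x : x < 3 -> nat_of_ord (inord x : 'I_3) = x.
Proof. by move=> h; rewrite inordK. Qed.

Lemma cl_lt k : cl k < T + P.
Proof. by have [] := cl_inv k. Qed.

Lemma inc_cl k : inc (cl k) = cl k.+1.
Proof. by rewrite /cl iterS. Qed.

Lemma trans_mk ph a b c : ph < 3 -> a < T + P -> b < T + P ->
  trans (mk ph a b) c =
    if c == AA then (if ph == 0 then mk 0 (inc a) b else None)
    else if c == AN then (if ph <= 1 then mk 1 a (inc b) else None)
    else if c == NA then (if (ph == 0) || (ph == 2) then mk 2 a (inc b) else None)
    else None.
Proof. by move=> h1 h2 h3; rewrite /trans /mk inord3 // !inordK'. Qed.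

Lemma s1 k : foldl trans (mk 0 0 0) (nseq k AA) = mk 0 (cl k) 0.
Proof.
rewrite foldl_nseq; elim: k => [|k IH] //.
by rewrite iterS IH trans_mk ?cl_lt ?eqxx ?inc_cl //; lia.
Qed.

Lemma s2 k c : c < T + P ->
  foldl trans (mk 0 c 0) (nseq k AN) = mk (if k == 0 then 0 else 1) c (cl k).
Proof.
move=> hc; rewrite foldl_nseq; elim: k => [|k IH] //.
rewrite iterS IH trans_mk ?cl_lt //; last by case: (k == 0).
rewrite eq_sym AA_AN eqxx inc_cl; by case: (k == 0).
Qed.

Lemma s3 k c : c < T + P ->
  foldl trans (mk 0 c 0) (nseq k NA) = mk (if k == 0 then 0 else 2) c (cl k).
Proof.
move=> hc; rewrite foldl_nseq; elim: k => [|k IH] //.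
rewrite iterS IH trans_mk ?cl_lt //; last by case: (k == 0).
rewrite eq_sym AA_NA eq_sym AN_NA eqxx inc_cl; by case: (k == 0).
Qed.

Definition phs m n := if m - n == 0 then (if n - m == 0 then 0 else 2) else 1.

Lemma run m n : foldl trans (mk 0 0 0) (cw m n) =
  mk (phs m n) (cl (minn m n)) (cl (m - n + (n - m))).
Proof.
rewrite /cw !foldl_cat s1 s2 ?cl_lt // /phs.
case: (leqP m n) => h.
- have -> : m - n = 0 by lia.
  by rewrite /= s3 ?cl_lt.
- have -> : n - m = 0 by lia.
  have -> : (m - n == 0) = false by apply/eqP; lia.
  by rewrite addn0.
Qed.

Lemma acc_cw m n : dfa_accepts D (cw m n) <-> Qn m n.
Proof.
have key : Qn (cl (minn m n)) (cl (minn m n) + cl (m - n + (n - m))) <-> Qn m n.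
  rewrite -Q_cl; case: (leqP m n) => hmn.
    by have -> : m + (m - n + (n - m)) = n by lia.
  have -> : n + (m - n + (n - m)) = m by lia.
  by split; apply: Qs.
rewrite /dfa_accepts /= run /fin /mk !inordK' ?cl_lt //.
case: excluded_middle_informative => h.
- by split=> // _; apply/key.
- by split=> // H; exfalso; apply: h; apply/key.
Qed.

Lemma nseq_rcons (A : Type) k (c : A) : rcons (nseq k c) c = nseq k.+1 c.
Proof. by elim: k => //= k ->. Qed.

Lemma cw_le m n : n <= m -> cw m n = nseq n AA ++ nseq (m - n) AN.
Proof.
move=> h; rewrite /cw (_ : n - m = 0) ?cats0 //; last by lia.
by have -> : minn m n = n by lia.
Qed.

Lemma cw_ge m n : m <= n -> cw m n = nseq m AA ++ nseq (n - m) NA.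
Proof.
move=> h; rewrite /cw (_ : m - n = 0) //; last by lia.
by have -> : minn m n = m by lia.
Qed.

Lemma cw_AN m n : n <= m -> rcons (cw m n) AN = cw m.+1 n.
Proof.
move=> h; rewrite cw_le // cw_le; last by lia.
by rewrite rcons_cat nseq_rcons subSn.
Qed.

Lemma cw_NA m n : m <= n -> rcons (cw m n) NA = cw m n.+1.
Proof.
move=> h; rewrite cw_ge // cw_ge; last by lia.
by rewrite rcons_cat nseq_rcons subSn.
Qed.

Lemma cw_AA n : rcons (cw n n) AA = cw n.+1 n.+1.
Proof. by rewrite !cw_le // !subnn !cats0 nseq_rcons. Qed.

Lemma phs_spec m n : (phs m n = 0 /\ m = n) \/ (phs m n = 1 /\ n < m) \/
  (phs m n = 2 /\ m < n).
Proof.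
rewrite /phs; case: (ltngtP m n) => h.
- have -> : m - n = 0 by lia.
  have -> : (n - m == 0) = false by apply/eqP; lia.
  by right; right.
- have -> : (m - n == 0) = false by apply/eqP; lia.
  by right; left.
- by subst; rewrite subnn; left.
Qed.

Lemma live w : foldl trans (mk 0 0 0) w <> None -> exists m n, w = cw m n.
Proof.
elim/last_ind: w => [|w c IH]; first by move=> _; exists 0, 0.
rewrite foldl_rcons => H.
case E0 : (foldl trans (mk 0 0 0) w) => [s|]; last by rewrite E0 in H.
have [m [n ew]] : exists m n, w = cw m n by apply: IH; rewrite E0.
rewrite ew run in H.
have hph : phs m n < 3 by case: (phs_spec m n) => [[-> _]|[[-> _]|[-> _]]].
rewrite trans_mk ?cl_lt // in H.
move: H; case: eqP => [->|_].
  case: ifP => // h _; exists m.+1, n.+1.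
  case: (phs_spec m n) => [[_ e]|[[e _]|[e _]]]; last 2 first.
  - by rewrite e in h.
  - by rewrite e in h.
  by rewrite ew e cw_AA.
case: eqP => [->|_].
  case: ifP => // h _; exists m.+1, n.
  rewrite ew cw_AN //.
  by case: (phs_spec m n) => [[_ e]|[[e l]|[e _]]]; [lia|lia|rewrite e in h].
case: eqP => [->|_] //.
case: ifP => // h _; exists m, n.+1.
rewrite ew cw_NA //.
by case: (phs_spec m n) => [[_ e]|[[e l]|[e l]]]; [lia|rewrite e in h|lia].
Qed.

Lemma D_spec w : dfa_accepts D w <-> exists m n, w = cw m n /\ Qn m n.
Proof.
split.
- move=> H.
  have [m [n ew]] : exists m n, w = cw m n.
    apply: live => E0; move: H; rewrite /dfa_accepts /=.
    by rewrite E0.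
  by exists m, n; split=> //; apply/acc_cw; rewrite -ew.
- by move=> [m [n [-> H]]]; apply/acc_cw.
Qed.
End Build.

Lemma rel_dfa (S : Type) (phi : seq unit -> S) r (Ri : r.-tuple S -> Prop) (h : r = 2) :
  regular_rel (Lambda (fun _ => True) phi Ri) ->
  exists M : dfa Sig, forall m n,
    Ri (tcast (esym h) [tuple phi (nseq m tt); phi (nseq n tt)]) <-> dfa_accepts M (cw m n).
Proof.
subst r; move=> [M HM]; exists M => m n; rewrite tcast_id -HM.
have emt : forall a b, map_tuple phi [tuple a; b] = [tuple phi a; phi b].
  by move=> a b; apply: val_inj.
split.
- move=> H; exists [tuple nseq m tt; nseq n tt]; split; last exact: conv_cw.
  by split=> //; rewrite emt.
- move=> [ws [[_ H] e]].
  move: e H; rewrite (tuple2_unit ws) conv_cw => /cw_inj [-> ->].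
  by rewrite emt.
Qed.

Lemma key (S : Type) (phi : seq unit -> S) (Rel : S -> S -> Prop) :
  injective phi -> (forall s, exists w, phi w = s) ->
  (exists M : dfa Sig, forall m n,
     Rel (phi (nseq m tt)) (phi (nseq n tt)) <-> dfa_accepts M (cw m n)) ->
  regular_rel (Lambda (fun _ => True) phi
     (fun t : 2.-tuple S => gen_equiv Rel (tnth t ord0) (tnth t ord_max))).
Proof.
move=> inj sur [M HM].
pose Rn m n := Rel (phi (nseq m tt)) (phi (nseq n tt)).
have [K [p [K0 [p0 [RN1 RN2]]]]] := @rel_nice M Rn HM.
pose E a b := Rn a b \/ Rn b a.
have Esym : forall m n, E m n -> E n m by move=> m n [h|h]; [right|left].
have EN1 : forall m n, K <= m -> K <= n -> (E m n <-> E (m + p) (n + p)).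
  by move=> m n hm hn; rewrite /E (RN1 m n) // (RN1 n m).
have EN2 : forall m n, m + K <= n -> (E m n <-> E m (n + p)).
  by move=> m n h; have [h1 h2] := RN2 m n h; rewrite /E h1 h2.
have [T [P [P0 [QN1 QN2]]]] := Q_nice Esym K0 p0 EN1 EN2.
pose Qn m n := gen_equiv Rel (phi (nseq m tt)) (phi (nseq n tt)).
have pre : forall y, exists k, phi (nseq k tt) = y.
  by move=> y; case: (sur y) => w <-; exists (size w); rewrite -unit_seq.
have QQ : forall m n, Qn m n <-> Qc E m n.
  move=> m n; split.
  - have fwd : forall x y, gen_equiv Rel x y -> forall m n, x = phi (nseq m tt) ->
        y = phi (nseq n tt) -> Qc E m n; last by move=> H; exact: fwd H m n erefl erefl.
    move=> x y; elim=> {x y} [x y H|x|x y H IH|x y z H1 IH1 H2 IH2] m' n' ex ey.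
    + by apply: rt_step; left; rewrite /Rn -ex -ey.
    + have e : nseq m' tt = nseq n' tt by apply: inj; rewrite -ex -ey.
      by have := congr1 size e; rewrite !size_nseq => ->; apply: rt_refl.
    + exact/(Qsym Esym)/IH.
    + have [k ek] := pre y.
      exact: rt_trans (IH1 m' k ex (esym ek)) (IH2 k n' (esym ek) ey).
  - elim=> [a b [h|h]|a|a b c _ IH1 _ IH2].
    + exact: rst_step.
    + by apply: rst_sym; apply: rst_step.
    + exact: rst_refl.
    + exact: rst_trans IH1 IH2.
have Qs : forall m n, Qn m n -> Qn n m by move=> m n; apply: rst_sym.
have QN1' : forall m n, T <= m -> T <= n -> (Qn m n <-> Qn (m + P) (n + P)).
  by move=> m n hm hn; rewrite !QQ QN1.
have QN2' : forall m n, m + T <= n -> (Qn m n <-> Qn m (n + P)).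
  by move=> m n h; rewrite !QQ QN2.
exists (D Qn T P) => w; rewrite (D_spec P0 Qs QN1' QN2').
split.
- move=> [ws [[_ H] e]].
  exists (size (tnth ws ord0)), (size (tnth ws ord_max)).
  split; first by rewrite -e {1}(tuple2_unit ws) conv_cw.
  by move: H; rewrite !tnth_map /Qn -!unit_seq.
- move=> [m [n [-> H]]]; exists [tuple nseq m tt; nseq n tt].
  split; last exact: conv_cw.
  by split=> //; exact: H.
Qed.

Theorem corollary4p7 (S : Type) (I : finType) (ar : I -> nat)
  (rels : forall i, (ar i).-tuple S -> Prop) (phi : seq unit -> S)
  (Hpres : injective_unary_FA_presentation rels phi)
  (i : I) (hi : ar i = 2) :
  let Q := gen_equiv (binrel rels hi) in
  regular_rel (Lambda (fun _ => True) phi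
                 (fun t : 2.-tuple S => Q (tnth t ord0) (tnth t ord_max)))
  /\ unary_FA_presentable (aug_rels rels Q).
Proof.
move=> Q.
case: Hpres => [[regL surj regEq regR] inj].
have surj' : forall s, exists w, phi w = s by move=> s; case: (surj s) => w [_ e]; exists w.
have [M HM] := rel_dfa hi (regR i).
have part1 : regular_rel (Lambda (fun _ => True) phi
                 (fun t : 2.-tuple S => Q (tnth t ord0) (tnth t ord_max))).
  exact: (@key S phi (binrel rels hi) inj surj' (ex_intro _ M HM)).
split=> //.
exists (fun _ => True), phi; split=> //.
case=> [i'|] /=; [exact: regR | exact: part1].
Qed.
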